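(* Let $\mathcal T,\Omega>0$ and $N_1,N_2\in\mathbb N$, and set $L_1:=2N_1+1$, $L_2:=2N_2+1$. Let $$w(x)=\sum_{k=-N_1}^{N_1}w_k\,\mathrm e^{2\pi i\frac{\Omega kx}{L_1}},\qquad x\in\mathbb R,$$ with $w_k\in\mathbb C$, be an $\frac{L_1}{\Omega}$-periodic trigonometric polynomial. Then for all $\tau,\nu\in\mathbb R$ and all $x_j=\frac{\mathcal T j}{L_2}$, $j=-N_2,\dots,N_2$, $$\mathrm e^{2\pi i\nu x_j}\,w(x_j-\tau)=\sum_{u=-N_1}^{N_1}\sum_{v=-N_2}^{N_2}\mathrm e^{2\pi i\frac{x_jv}{\mathcal T}}\,w\Big(x_j-\frac{u}{\Omega}\Big)\,a(\tau,\nu)_{(u,v)},$$ where $$a(\tau,\nu)_{(u,v)}:=\frac{1}{L_1L_2}\,D_{N_1}\Big(\frac{u-\Omega\tau}{L_1}\Big)\,D_{N_2}\Big(\frac{v-\mathcal T\nu}{L_2}\Big),\qquad u=-N_1,\dots,N_1,\ v=-N_2,\dots,N_2.$$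
   Context: For $N\in\mathbb N$, $D_N(x)=\sum_{k=-N}^{N}\mathrm e^{2\pi ikx}$ is the $N$th Dirichlet kernel. The left-hand side is $(M_\nu T_\tau w)(x_j)$, where $T_\tau f(x)=f(x-\tau)$ and $M_\nu f(x)=f(x)\mathrm e^{2\pi i\nu x}$. *)

(* Defs.v *)
From mathcomp Require Import all_boot all_order all_algebra.
From mathcomp Require Import all_classical all_reals all_analysis.
From mathcomp Require Import complex.
Set Implicit Arguments. Unset Strict Implicit. Unset Printing Implicit Defensive.
Import Order.TTheory GRing.Theory Num.Theory.
Local Open Scope ring_scope.
Local Open Scope complex_scope.

Definition cexp2pi (R : realType) (t : R) : R[i] :=
  (cos (2 * pi * t))%:C + 'i * (sin (2 * pi * t))%:C.

Definition zsum (R : realType) (N : nat) (F : int -> R[i]) : R[i] :=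
  \sum_(0 <= k < (2 * N).+1) F (k%:Z - N%:Z).

Definition dirichlet (R : realType) (N : nat) (x : R) : R[i] :=
  zsum N (fun k => cexp2pi (k%:~R * x)).

Definition trigpoly (R : realType) (Omega : R) (N1 : nat) (wk : int -> R[i]) (x : R)
  : R[i] :=
  zsum N1 (fun k => wk k * cexp2pi (Omega * k%:~R * x / ((2 * N1).+1)%:R)).

Definition acoef (R : realType) (T Omega : R) (N1 N2 : nat) (tau nu : R) (u v : int)
  : R[i] :=
  let L1 : R := ((2 * N1).+1)%:R in
  let L2 : R := ((2 * N2).+1)%:R in
  ((L1 * L2)^-1)%:C * dirichlet N1 ((u%:~R - Omega * tau) / L1)
    * dirichlet N2 ((v%:~R - T * nu) / L2).

(* Main.v *)
Require Import Defs.
From mathcomp Require Import all_boot all_order all_algebra.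
From mathcomp Require Import all_classical all_reals all_analysis.
From mathcomp Require Import complex.
From mathcomp Require Import ring lra zify.
From Stdlib Require Import Lia.
Import Order.TTheory GRing.Theory Num.Theory.
Local Open Scope ring_scope.
Local Open Scope complex_scope.


Section E.
Variable R : realType.
Implicit Types (T : R).
Local Notation e := (@cexp2pi R).

Lemma eE (t : R) : e t = (cos (2 * pi * t) +i* sin (2 * pi * t))%C.
Proof. by rewrite /cexp2pi; simpc. Qed.

Lemma eD (a b : R) : e (a + b) = e a * e b.
Proof.
rewrite !eE; simpc; rewrite mulrDr cosD sinD.
by congr (_ +i* _); ring.
Qed.

Lemma e0 : e 0 = 1.
Proof. by rewrite eE mulr0 cos0 sin0. Qed.

Lemma eN (a : R) : e (- a) * e a = 1.
Proof. by rewrite -eD addNr e0. Qed.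

Lemma e1 : e 1 = 1.
Proof. by rewrite eE mulr1 mulr_natl cos2pi sin2pi. Qed.

Lemma eMn (n : nat) (a : R) : e (n%:R * a) = e a ^+ n.
Proof.
elim: n => [|n IH]; first by rewrite mul0r e0.
by rewrite exprS -IH -eD mulrSr mulrDl mul1r addrC.
Qed.

Lemma eint (n : int) : e n%:~R = 1.
Proof.
case: n => n.
  by rewrite -[_%:~R]mulr1 eMn e1 expr1n.
have := eN (n.+1%:R); rewrite -[(n.+1)%:R]mulr1 eMn e1 expr1n mulr1.
by rewrite mulr1 NegzE intrN.
Qed.

Lemma cos2pi_lt1 (s : R) : 0 < s < 1 -> cos (2 * pi * s) < 1.
Proof.
move=> /andP[s0 s1].
have -> : 2 * pi * s = pi * s + pi * s by ring.
rewrite cosD.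
have hs : 0 < sin (pi * s).
  apply: sin_gt0_pi; have hp := pi_gt0 R.
  by rewrite mulr_gt0 //= -[X in _ < X]mulr1 ltr_pM2l.
have := cos2Dsin2 (pi * s); nra.
Qed.

Lemma e_neq1 (t : R) : 0 < `|t| < 1 -> e t != 1.
Proof.
move=> ht; apply/eqP; rewrite eE => -[hc _].
have := cos2pi_lt1 _ ht.
have -> : cos (2 * pi * `|t|) = cos (2 * pi * t).
  case: (ltrP t 0) => h.
    by rewrite ltr0_norm // mulrN cosN.
  by rewrite ger0_norm.
by rewrite hc ltxx.
Qed.

Lemma orth (N : nat) (d : int) : (`|d| <= 2 * N)%N ->
  zsum N (fun u => e (d%:~R * u%:~R / ((2 * N).+1)%:R)) =
  if d == 0 then ((2 * N).+1)%:R else 0.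
Proof.
move=> hd.
set L : R := ((2 * N).+1)%:R.
have L0 : L != 0 by rewrite /L pnatr_eq0.
set z := e (d%:~R / L).
set c := e (- (d%:~R * N%:R / L)).
have hterm : forall k : nat, e (d%:~R * (k%:Z - N%:Z)%:~R / L) = c * z ^+ k.
  move=> k; rewrite /c /z -eMn -eD; congr cexp2pi.
  rewrite intrB /=; field; apply/eqP; have := ler0n R N; lra.
rewrite /zsum; under eq_bigr => k _ do rewrite hterm.
rewrite -big_distrr /= big_mkord.
have [d0|dn0] := eqVneq d 0.
  rewrite /z /c d0 mulr0z !mul0r oppr0 e0 mul1r.
  under eq_bigr do rewrite expr1n.
  by rewrite sumr_const card_ord.
have zL : z ^+ (2 * N).+1 = 1.
  rewrite /z -eMn -/L mulrC divfK //; exact: eint.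
have z1 : z != 1.
  apply: e_neq1; rewrite normrM normfV /L normr_nat -intr_norm -natr_absz.
  apply/andP; split.
    by rewrite divr_gt0 // ltr0n absz_gt0.
  by rewrite ltr_pdivrMr ?ltr0n // mul1r ltr_nat ltnS.
have : (z - 1) * \sum_(i < (2 * N).+1) z ^+ i = 0 by rewrite -subrX1 zL subrr.
move/eqP; rewrite mulf_eq0 subr_eq0 (negPf z1) /= => /eqP ->.
by rewrite mulr0.
Qed.

Lemma sift (N : nat) (k : int) (F : int -> R[i]) : (`|k| <= N)%N ->
  zsum N (fun m => F m * zsum N (fun u => e ((m - k)%:~R * u%:~R / ((2 * N).+1)%:R))) =
  ((2 * N).+1)%:R * F k.
Proof.
move=> hk.
rewrite {1}/zsum.
transitivity (\sum_(0 <= i < (2 * N).+1 | i == absz (k + N%:Z))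
                (((2 * N).+1)%:R * F (i%:Z - N%:Z))).
  rewrite [RHS]big_mkcond /=; apply: eq_big_nat => i /= hi.
  rewrite orth; last by lia.
  have -> : (i%:Z - N%:Z - k == 0) = (i == absz (k + N%:Z)).
    by apply/eqP/eqP; lia.
  by case: ifP => _; rewrite ?mulr0 // mulrC.
rewrite big_nat1_eq.
have -> : (0 <= absz (k + N%:Z)%R < (2 * N).+1)%N by lia.
by congr (_ * F _); lia.
Qed.

Lemma partB (N2 : nat) (T nu : R) (j : int) : 0 < T -> (`|j| <= N2)%N ->
  zsum N2 (fun v => (((2 * N2).+1)%:R^-1)%:C *
     (e (T * j%:~R / ((2 * N2).+1)%:R * v%:~R / T) *
      dirichlet N2 ((v%:~R - T * nu) / ((2 * N2).+1)%:R))) =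
  e (nu * (T * j%:~R / ((2 * N2).+1)%:R)).
Proof.
move=> hT hj.
set L : R := ((2 * N2).+1)%:R.
have L0 : L != 0 by rewrite /L pnatr_eq0.
have T0 : T != 0 by rewrite gt_eqF.
rewrite /dirichlet.
transitivity (zsum N2 (fun m => ((L^-1)%:C * e (- (m%:~R * T * nu / L))) *
   zsum N2 (fun v => e ((m - (- j))%:~R * v%:~R / ((2 * N2).+1)%:R)))).
  rewrite /zsum.
  under eq_bigr => v _ do rewrite big_distrr big_distrr /=.
  rewrite exchange_big /=; apply: eq_bigr => m _.
  rewrite big_distrr /=; apply: eq_bigr => v _.
  rewrite -[in RHS]mulrA -!eD; congr (_ * e _).
  rewrite ?intrB ?intrN /= -/L; field; by apply/andP.
rewrite (@sift N2 (- j) (fun m : int => (L^-1)%:C * e (- (m%:~R * T * nu / L)))) ?abszN // mulrA.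
have -> : (((2 * N2).+1)%:R : R[i]) = L%:C by rewrite /L rmorph_nat.
rewrite -rmorphM /= mulfV // mul1r; congr e.
rewrite intrN; field; apply/eqP; have := ler0n R N2; lra.
Qed.

Lemma rearrA (c a : R[i]) (p q r s t : R) : p + q = r + s + t ->
  c * (a * e p * e q) = a * c * e r * e s * e t.
Proof.
move=> h; rewrite -!mulrA -!eD addrA -h; exact: mulrCA.
Qed.

Lemma partA (Om tau x : R) (N1 : nat) (wk : int -> R[i]) : Om != 0 ->
  zsum N1 (fun u => (((2 * N1).+1)%:R^-1)%:C *
    (trigpoly Om N1 wk (x - u%:~R / Om) *
     dirichlet N1 ((u%:~R - Om * tau) / ((2 * N1).+1)%:R))) =
  trigpoly Om N1 wk (x - tau).
Proof.
move=> O0.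
set L : R := ((2 * N1).+1)%:R.
have L0 : L != 0 by rewrite /L pnatr_eq0.
rewrite /trigpoly /dirichlet.
transitivity (zsum N1 (fun k => zsum N1 (fun m =>
  (wk k * (L^-1)%:C * e (Om * k%:~R * x / L) * e (- (m%:~R * Om * tau / L))) *
  zsum N1 (fun u => e ((m - k)%:~R * u%:~R / ((2 * N1).+1)%:R))))).
  rewrite /zsum.
  under eq_bigr => u _ do (rewrite big_distrl big_distrr /=;
     under eq_bigr => k _ do rewrite big_distrr big_distrr /=).
  rewrite exchange_big /=; apply: eq_bigr => k _.
  rewrite exchange_big /=; apply: eq_bigr => m _.
  rewrite big_distrr /=; apply: eq_bigr => u _.
  apply: rearrA; rewrite ?intrB /= -/L; field; by apply/andP.
apply: eq_big_nat => i hi.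
rewrite (@sift N1 (i%:Z - N1%:Z) (fun m : int =>
   wk (i%:Z - N1%:Z) * (L^-1)%:C * e (Om * (i%:Z - N1%:Z)%:~R * x / L) *
   e (- (m%:~R * Om * tau / L)))); last by lia.
have -> : (((2 * N1).+1)%:R : R[i]) = L%:C by rewrite /L rmorph_nat.
rewrite !mulrA [L%:C * _]mulrC -(mulrA (wk _)) -rmorphM /= mulfV // mulr1 -mulrA -eD.
congr (_ * e _); field; apply/eqP; have := ler0n R N1; lra.
Qed.
End E.

Theorem theorem3 (R : realType) (T Omega : R) (N1 N2 : nat) (wk : int -> R[i])
  (hT : 0 < T) (hOmega : 0 < Omega) (tau nu : R) (j : int)
  (hj : (- N2%:Z <= j <= N2%:Z)%R) :
  let L2 : R := ((2 * N2).+1)%:R in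
  let xj : R := T * j%:~R / L2 in
  let w := trigpoly Omega N1 wk in
  cexp2pi (nu * xj) * w (xj - tau) =
  zsum N1 (fun u => zsum N2 (fun v =>
     cexp2pi (xj * v%:~R / T) * w (xj - u%:~R / Omega)
       * acoef T Omega N1 N2 tau nu u v)).
Proof.
move=> L2 xj w.
have O0 : Omega != 0 by rewrite gt_eqF.
have hj' : (`|j| <= N2)%N by move: hj => /andP[]; lia.
transitivity (zsum N1 (fun u => (((2 * N1).+1)%:R^-1)%:C *
    (w (xj - u%:~R / Omega) *
     dirichlet N1 ((u%:~R - Omega * tau) / ((2 * N1).+1)%:R))) *
  zsum N2 (fun v => (L2^-1)%:C *
     (cexp2pi (xj * v%:~R / T) *
      dirichlet N2 ((v%:~R - T * nu) / L2)))).
  rewrite /w /xj /L2 partA // partB //; exact: mulrC.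
rewrite /zsum big_distrl; apply: eq_bigr => u _.
rewrite big_distrr; apply: eq_bigr => v _.
rewrite /acoef /= invfM rmorphM /=; ring.
Qed.
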